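(* Fix integers $a,b\ge 2$ and $\varepsilon>0$. Let $n\to\infty$ and let $m=m(n)$ satisfy $m/n\to\infty$. Then all hypergraphs $H\in\mathcal{H}(a,n,m)$, except for $o\!\left(\binom{\binom{n}{a}}{m}\right)$ of them, have the following property: for every coloring $C:[n]\to[b]$ and every $a$-element multiset $T$ of colors from $[b]$, the number of hyperedges of $H$ whose color multiset with respect to $C$ is $T$ lies in the interval $\left[(p^C(T)-\varepsilon)m,\ (p^C(T)+\varepsilon)m\right]$.
   Context: $\mathcal{H}(a,n,m)$ is the family of all $a$-uniform hypergraphs on vertex set $[n]$ with exactly $m$ hyperedges (each hyperedge an $a$-element subset of $[n]$); so $|\mathcal{H}(a,n,m)|=\binom{\binom{n}{a}}{m}$. A coloring $C:[n]\to[b]$ is an arbitrary map (not necessarily proper). For a coloring $C$, $n_j^C$ is the number of vertices of color $j$. The color multiset of a hyperedge $e$ with respect to $C$ is the multiset of colors $C(v)$, $v\in e$, counted with multiplicity. For an $a$-element multiset $T$ of colors, $I_T(j)$ is the multiplicity of $j$ in $T$, and $p^C(T)=\prod_{j=1}^b\binom{n_j^C}{I_T(j)}\big/\binom{n}{a}$, i.e. the probability that a uniformly random $a$-subset of $[n]$ has color multiset $T$. *)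

(* Defs.v *)
From mathcomp Require Import all_boot all_order all_algebra.
From mathcomp Require Import reals.
Set Implicit Arguments. Unset Strict Implicit. Unset Printing Implicit Defensive.
Import Order.TTheory GRing.Theory Num.Theory.
Local Open Scope ring_scope.

(* Vertex set [n] is 'I_n, color set [b] is 'I_b.
   A hyperedge is a {set 'I_n}; a hypergraph is a {set {set 'I_n}}. *)

Definition hyp_family (a n m : nat) : {set {set {set 'I_n}}} :=
  [set H : {set {set 'I_n}} | (H \subset [set e : {set 'I_n} | #|e| == a])
                              && (#|H| == m)%N].

Definition coloring (n b : nat) := {ffun 'I_n -> 'I_b}.

(* An a-element multiset T of colors from [b], given by its multiplicity
   function I_T : [b] -> nat (values bounded by a), with total size a. *)
Definition cmset (a b : nat) := {ffun 'I_b -> 'I_a.+1}.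
Definition is_amset (a b : nat) (T : cmset a b) : bool :=
  (\sum_(j < b) (T j : nat) == a)%N.

Definition ncol (n b : nat) (C : coloring n b) (j : 'I_b) : nat :=
  #|[set v : 'I_n | C v == j]|.

Definition has_type (a n b : nat) (C : coloring n b) (e : {set 'I_n})
  (T : cmset a b) : bool :=
  [forall j : 'I_b, #|[set v in e | C v == j]| == (T j : nat)].

Definition count_type (a n b : nat) (H : {set {set 'I_n}}) (C : coloring n b)
  (T : cmset a b) : nat :=
  #|[set e in H | has_type C e T]|.

Definition pC (R : realType) (a n b : nat) (C : coloring n b) (T : cmset a b) : R :=
  (\prod_(j < b) 'C(ncol C j, T j))%:R / 'C(n, a)%:R.

Definition good (R : realType) (a b n m : nat) (eps : R) (H : {set {set 'I_n}}) : bool :=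
  [forall C : coloring n b, forall T : cmset a b, is_amset T ==>
     (((@pC R a n b C T - eps) * m%:R <= (count_type H C T)%:R) &&
      ((count_type H C T)%:R <= (@pC R a n b C T + eps) * m%:R))].

Definition bad_family (R : realType) (a b n m : nat) (eps : R) : {set {set {set 'I_n}}} :=
  [set H in hyp_family a n m | ~~ @good R a b n m eps H].

(* Main.v *)
Require Import Defs.
From mathcomp Require Import all_boot all_order all_algebra.
From mathcomp Require Import reals.
From mathcomp Require Import zify.
From mathcomp Require Import sequences exp.
From mathcomp.algebra_tactics Require Import ring lra.
Set Implicit Arguments. Unset Strict Implicit. Unset Printing Implicit Defensive.

Section Comb.
Variable U : finType.

Definition draws (A : {set U}) (m : nat) : {set {set U}} :=
  [set H : {set U} | (H \subset A) && (#|H| == m)].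

Lemma super_count (A J : {set U}) m : J \subset A -> #|J| <= m ->
  #|[set H in draws A m | J \subset H]| = 'C(#|A| - #|J|, m - #|J|).
Proof.
move=> JA Jm.
have cAJ : #|A :\: J| = #|A| - #|J| by rewrite cardsD (setIidPr JA).
rewrite -cAJ -cards_draws.
have -> : [set H in draws A m | J \subset H] =
  [set H' :|: J | H' in [set H' : {set U} | H' \subset A :\: J & #|H'| == m - #|J|]].
  apply/setP=> H; rewrite !inE; apply/idP/imsetP.
  - case/andP=> /andP[HA /eqP Hm] JH; exists (H :\: J).
      rewrite inE setSD //= cardsD (setIidPr JH) Hm //.
    apply/setP=> x; rewrite !inE; case: (boolP (x \in J)) => xJ /=.
      by rewrite (subsetP JH).
    by rewrite orbF.
  - case=> H' /[!inE] /andP[H'AJ /eqP cH'] ->.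
    have dis : [disjoint H' & J].
      by rewrite -setI_eq0; apply/eqP/setP=> x; rewrite !inE;
         apply/negP=> /andP[/(subsetP H'AJ)]; rewrite inE => /andP[/negP].
    rewrite subsetUr andbT subUset JA andbT (subset_trans H'AJ (subsetDl _ _)) /=.
    by rewrite cardsU (disjoint_setI0 dis) cards0 subn0 cH' subnK.
rewrite card_in_imset //.
move=> H1 H2 /[!inE] /andP[H1s _] /andP[H2s _] E; apply/setP=> x.
have := congr1 (fun X : {set U} => x \in X) E; rewrite /= !inE.
case: (boolP (x \in J)) => xJ; last by rewrite !orbF.
have := subsetP H1s x; have := subsetP H2s x; rewrite !inE xJ /=.
by case: (x \in H1); case: (x \in H2) => // _ ->.
Qed.

Lemma sum_ind_card (P : pred {set U}) :
  \sum_(J : {set U}) (P J : nat) = #|[set J | P J]|.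
Proof.
rewrite -sum1_card [RHS]big_mkcond /=; apply: eq_bigr => J _; rewrite inE.
by case: (P J).
Qed.

Lemma double_count (A S : {set U}) m j : S \subset A -> j <= m ->
  \sum_(H in draws A m) 'C(#|H :&: S|, j) = 'C(#|S|, j) * 'C(#|A| - j, m - j).
Proof.
move=> SA jm.
transitivity (\sum_(H in draws A m) \sum_(J : {set U})
                 ((J \subset H :&: S) && (#|J| == j) : nat)).
  apply: eq_bigr => H _; rewrite sum_ind_card cards_draws //.
rewrite exchange_big /=.
transitivity (\sum_(J : {set U})
   (((J \subset S) && (#|J| == j) : nat) * 'C(#|A| - j, m - j))).
  apply: eq_bigr => J _.
  case: (boolP ((J \subset S) && (#|J| == j))) => [/andP[JS /eqP Jj] | nJ].
  - have Jm : #|J| <= m by rewrite Jj.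
    rewrite mul1n -[in RHS]Jj -(super_count (subset_trans JS SA) Jm).
    rewrite -[#|[set H in draws A m | _]|]sum1_card [RHS]big_mkcond [LHS]big_mkcond /=.
    apply: eq_bigr => H _; rewrite !inE subsetI JS Jj eqxx !andbT.
    by case: ((H \subset A) && (#|H| == m)); case: (J \subset H).
  - rewrite mul0n; apply: big1 => H _; rewrite subsetI.
    by move: nJ; case: (J \subset S); case: (#|J| == j); rewrite ?andbF.
by rewrite -big_distrl /= sum_ind_card cards_draws.
Qed.

Lemma ffact_ineq s M j : s <= M -> s ^_ j * M ^ j <= M ^_ j * s ^ j.
Proof.
move=> sM; elim: j => [|j IH]; first by rewrite !ffactn0 !expn0.
rewrite !ffactnSr !expnSr mulnACA [X in _ <= X]mulnACA.
apply: leq_mul => //; nia.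
Qed.

Lemma bin_ineq s M j : s <= M -> 'C(s, j) * M ^ j <= 'C(M, j) * s ^ j.
Proof.
move=> sM; rewrite -(leq_pmul2r (fact_gt0 j)) mulnAC bin_ffact.
by rewrite [X in _ <= X]mulnAC bin_ffact ffact_ineq.
Qed.

Lemma bin_mul_id (A : {set U}) m j : j <= m ->
  'C(#|A|, j) * 'C(#|A| - j, m - j) = 'C(m, j) * 'C(#|A|, m).
Proof.
move=> jm; rewrite -double_count //.
rewrite (eq_bigr (fun _ => 'C(m, j))); last first.
  by move=> H; rewrite inE => /andP[HA /eqP Hm]; rewrite (setIidPl HA) Hm.
by rewrite sum_nat_const /draws cards_draws mulnC.
Qed.

Lemma moment_nat (A S : {set U}) m j : S \subset A -> j <= m ->
  (\sum_(H in draws A m) 'C(#|H :&: S|, j)) * #|A| ^ j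
    <= 'C(m, j) * #|S| ^ j * 'C(#|A|, m).
Proof.
move=> SA jm; rewrite double_count // mulnAC.
apply: (@leq_trans ('C(#|A|, j) * #|S| ^ j * 'C(#|A| - j, m - j))).
  by rewrite leq_mul2r bin_ineq ?orbT // subset_leq_card.
by rewrite mulnAC bin_mul_id // mulnAC.
Qed.

End Comb.


Section Types.
Variables (a n b : nat) (C : coloring n b) (T : cmset a b).

Definition Aset : {set {set 'I_n}} := [set e : {set 'I_n} | #|e| == a].
Definition Sset : {set {set 'I_n}} := [set e in Aset | has_type C e T].

Lemma card_Aset : #|Aset| = 'C(n, a).
Proof. by rewrite /Aset card_draws card_ord. Qed.

Lemma card_split (e : {set 'I_n}) :
  #|e| = \sum_(j < b) #|[set v in e | C v == j]|.
Proof.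
rewrite -sum1_card (partition_big C predT) //=; apply: eq_bigr => j _.
by rewrite -sum1_card; apply: eq_bigl => v; rewrite inE.
Qed.

Definition phi (e : {set 'I_n}) : {dffun forall j : 'I_b, {set 'I_n}} :=
  [ffun j => [set v in e | C v == j]].

Definition Fam j : {set {set 'I_n}} :=
  [set B : {set 'I_n} | (B \subset [set v | C v == j]) && (#|B| == T j)].

Lemma phi_inj : injective phi.
Proof.
move=> e1 e2 E; apply/setP => v.
have := congr1 (fun f : {dffun forall j : 'I_b, {set 'I_n}} => v \in f (C v)) E.
by rewrite /= !ffunE !inE eqxx !andbT.
Qed.

Lemma card_Sset : is_amset T -> #|Sset| = \prod_(j < b) 'C(ncol C j, T j).
Proof.
move=> amT.
rewrite -(card_imset _ phi_inj).
have -> : phi @: Sset = setXn Fam.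
  apply/setP => f; apply/imsetP/setXnP.
  - case=> e; rewrite !inE => /andP[_ /forallP ht] -> j.
    rewrite ffunE !inE (ht j) andbT; apply/subsetP => v; rewrite !inE.
    by case/andP.
  - move=> Hf.
    have fe : phi [set v | v \in f (C v)] = f.
      apply/ffunP => j; rewrite ffunE; apply/setP => v; rewrite !inE.
      case: (eqVneq (C v) j) => [<-|ne]; first by rewrite andbT.
      rewrite andbF; apply/esym/negbTE/negP => vf.
      move: (Hf j); rewrite inE => /andP[/subsetP /(_ v vf)].
      by rewrite inE (negbTE ne).
    exists [set v | v \in f (C v)] => //.
    have ht : has_type C [set v | v \in f (C v)] T.
      apply/forallP => j.
      have := congr1 (fun g : {dffun forall j : 'I_b, {set 'I_n}} => g j) fe.
      rewrite /= ffunE => ->.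
      by move: (Hf j); rewrite inE => /andP[_].
    rewrite !inE ht andbT card_split.
    rewrite -(eqP amT); apply/eqP; apply: eq_bigr => j _.
    by move/forallP: ht => /(_ j) /eqP.
rewrite cardsXn; apply: eq_bigr => j _.
by rewrite /Fam cards_draws.
Qed.

End Types.


Import Order.TTheory GRing.Theory Num.Theory.
Local Open Scope ring_scope.

Section Real.
Variable R : realType.
Variable U : finType.

Lemma pow_expand (mu : R) X m : (X <= m)%N ->
  (mu + 1) ^+ X = \sum_(j < m.+1) mu ^+ j *+ 'C(X, j).
Proof.
move=> Xm; rewrite exprD1n (big_ord_widen m.+1 (fun j => mu ^+ j *+ 'C(X, j))) ?ltnS //.
rewrite big_mkcond /=; apply: eq_bigr => i _; case: ifP => // /negbT.
by rewrite -leqNgt => h; rewrite bin_small ?mulr0n.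
Qed.

Lemma mgf (A S : {set U}) m (mu : R) : S \subset A -> (0 < #|A|)%N -> 0 <= mu ->
  \sum_(H in draws A m) (mu + 1) ^+ #|H :&: S|
    <= 'C(#|A|, m)%:R * ((#|S|%:R / #|A|%:R) * mu + 1) ^+ m.
Proof.
move=> SA A0 mu0.
rewrite (eq_bigr (fun H => \sum_(j < m.+1) mu ^+ j *+ 'C(#|H :&: S|, j))); last first.
  move=> H; rewrite inE => /andP[_ /eqP Hm]; apply: pow_expand.
  by rewrite -Hm subset_leq_card // subsetIl.
rewrite exchange_big /= exprD1n mulr_sumr.
apply: ler_sum => j _.
rewrite sumrMnr.
have jm : (j <= m)%N by rewrite -ltnS.
have key := moment_nat SA jm.
set N := (\sum_(H in draws A m) _)%N in key *.
have Mpos : 0 < #|A|%:R ^+ j :> R by rewrite exprn_gt0 // ltr0n.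
have -> : 'C(#|A|, m)%:R * ((#|S|%:R / #|A|%:R * mu) ^+ j *+ 'C(m, j)) =
  mu ^+ j * (('C(m, j) * #|S| ^ j * 'C(#|A|, m))%N%:R / #|A|%:R ^+ j) :> R.
  rewrite !natrM !natrX -mulr_natr exprMn expr_div_n.
  field. by rewrite lt0r_neq0 // ltr0n.
rewrite -[mu ^+ j *+ N]mulr_natr; apply: ler_wpM2l; first by rewrite exprn_ge0.
by rewrite ler_pdivlMr // -natrX -natrM ler_nat.
Qed.

Lemma expR_nu (mu : R) : 0 <= mu -> expR (mu / (mu + 1)) <= mu + 1.
Proof.
move=> mu0.
have mu1 : 0 < mu + 1 by lra.
have h := expR_ge1Dx (- (mu / (mu + 1))).
have e : 1 + - (mu / (mu + 1)) = (mu + 1)^-1 by field; lra.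
rewrite e expRN in h.
by rewrite -ler_pV2 // inE ?unitfE ?expR_gt0 ?lt0r_neq0 ?expR_gt0 ?mu1.
Qed.

Lemma markov (A S : {set U}) m (mu t : R) : S \subset A -> (0 < #|A|)%N -> 0 <= mu ->
  #|[set H in draws A m | t < #|H :&: S|%:R]|%:R * expR (t * (mu / (mu + 1)))
    <= 'C(#|A|, m)%:R * expR ((#|S|%:R / #|A|%:R) * mu * m%:R).
Proof.
move=> SA A0 mu0.
have mu1 : 0 < mu + 1 by lra.
set nu := mu / (mu + 1).
have nu0 : 0 <= nu by rewrite divr_ge0 // ltW.
set p := #|S|%:R / #|A|%:R.
have p0 : 0 <= p by rewrite divr_ge0.
apply: (@le_trans _ _ ('C(#|A|, m)%:R * (p * mu + 1) ^+ m)); last first.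
  rewrite ler_wpM2l // expRM_natr lerXn2r // ?nnegrE ?expR_ge0 //.
    by rewrite addr_ge0 // mulr_ge0.
  by rewrite addrC expR_ge1Dx.
apply: le_trans (mgf m SA A0 mu0).
rewrite mulr_natl -sumr_const.
apply: (@le_trans _ _ (\sum_(H in draws A m | t < #|H :&: S|%:R) (mu + 1) ^+ #|H :&: S|)).
  rewrite [X in X <= _](eq_bigl (fun H => (H \in draws A m) && (t < #|H :&: S|%:R))); last first.
    by move=> H; rewrite inE.
  apply: ler_sum => H /andP[_ lt].
  apply: (@le_trans _ _ (expR (#|H :&: S|%:R * nu))).
    by rewrite ler_expR ler_wpM2r // ltW.
  rewrite expRM_natl lerXn2r // ?nnegrE ?expR_ge0 ?(ltW mu1) //.
  exact: expR_nu mu0.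
rewrite [X in _ <= X](bigID (fun H => t < #|H :&: S|%:R)) /= lerDl.
by apply: sumr_ge0 => H _; rewrite exprn_ge0 // ltW.
Qed.

Definition cst (eps : R) := (eps / 2) ^+ 2 / (eps / 2 + 1).

Lemma cst_gt0 eps : 0 < eps -> 0 < cst eps.
Proof. by move=> e0; rewrite /cst divr_gt0 // ?exprn_gt0; lra. Qed.

Lemma tail_up (A S : {set U}) m (eps : R) : S \subset A -> (0 < #|A|)%N -> 0 < eps ->
  #|[set H in draws A m | (#|S|%:R / #|A|%:R + eps) * m%:R < #|H :&: S|%:R]|%:R
    <= 'C(#|A|, m)%:R * expR (- (cst eps * m%:R)).
Proof.
move=> SA A0 e0.
set mu := eps / 2.
have mu0 : 0 < mu by rewrite /mu; lra.
have h := markov m ((#|S|%:R / #|A|%:R + eps) * m%:R) SA A0 (ltW mu0).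
set p := #|S|%:R / #|A|%:R in h *.
have p1 : p <= 1.
  by rewrite /p ler_pdivrMr ?ltr0n // mul1r ler_nat subset_leq_card.
rewrite -ler_pdivlMr ?expR_gt0 // -[_ * expR _ / _]mulrA -expRB in h.
apply: le_trans h _; rewrite ler_wpM2l // ler_expR.
rewrite -subr_le0.
have -> : p * mu * m%:R - (p + eps) * m%:R * (mu / (mu + 1)) - - (cst eps * m%:R)
   = m%:R * (mu ^+ 2 / (mu + 1) * (p - 1)).
  rewrite /cst -/mu; have -> : eps = 2 * mu by rewrite /mu; field.
  field; lra.
apply: mulr_ge0_le0 => //; apply: mulr_ge0_le0; last by lra.
by rewrite divr_ge0 ?exprn_ge0; lra.
Qed.

Lemma tail_low (A S : {set U}) m (eps : R) : S \subset A -> (0 < #|A|)%N -> 0 < eps ->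
  #|[set H in draws A m | #|H :&: S|%:R < (#|S|%:R / #|A|%:R - eps) * m%:R]|%:R
    <= 'C(#|A|, m)%:R * expR (- (cst eps * m%:R)).
Proof.
move=> SA A0 e0.
have DA : A :\: S \subset A by apply: subsetDl.
apply: le_trans (tail_up m DA A0 e0).
rewrite ler_nat; apply: subset_leq_card; apply/subsetP => H.
rewrite !inE => /andP[/andP[HA /eqP Hm] lt]; rewrite HA Hm eqxx /=.
have eH : H :&: (A :\: S) = H :\: S.
  apply/setP => x; rewrite !inE; case: (boolP (x \in H)) => xH; last by rewrite andbF.
  by rewrite (subsetP HA x xH) andbT.
have cH : #|H :&: (A :\: S)| = (m - #|H :&: S|)%N by rewrite eH -Hm -(cardsID S H) addKn.
have XS : (#|H :&: S| <= m)%N by rewrite -Hm subset_leq_card // subsetIl.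
have cA : #|A :\: S| = (#|A| - #|S|)%N by rewrite cardsD (setIidPr SA).
have SAn : (#|S| <= #|A|)%N by rewrite subset_leq_card.
rewrite cH cA !natrB //.
have -> : (#|A|%:R - #|S|%:R) / #|A|%:R = 1 - #|S|%:R / #|A|%:R :> R.
  by field; rewrite lt0r_neq0 // ltr0n.
move: lt; set X := #|H :&: S|%:R; set q := #|S|%:R / #|A|%:R; lra.
Qed.
End Real.


Lemma card_bigcup_le (I T : finType) (P : pred I) (F : I -> {set T}) :
  (#|\bigcup_(i | P i) F i| <= \sum_(i | P i) #|F i|)%N.
Proof.
elim/big_ind2: _ => [|x1 x2 y1 y2 h1 h2|i _] //; first by rewrite cards0.
apply: leq_trans (leq_card_setU x2 y2).1 _; exact: leq_add.
Qed.

Section Main.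
Variables (R : realType) (a b n m : nat) (eps : R).

Definition Bup (ct : coloring n b * cmset a b) : {set {set {set 'I_n}}} :=
  [set H in draws (@Aset a n) m |
     (#|@Sset a n b ct.1 ct.2|%:R / #|@Aset a n|%:R + eps) * m%:R
        < #|H :&: @Sset a n b ct.1 ct.2|%:R].
Definition Blow (ct : coloring n b * cmset a b) : {set {set {set 'I_n}}} :=
  [set H in draws (@Aset a n) m |
     #|H :&: @Sset a n b ct.1 ct.2|%:R <
     (#|@Sset a n b ct.1 ct.2|%:R / #|@Aset a n|%:R - eps) * m%:R].

Lemma bad_sub : (a <= n)%N ->
  @bad_family R a b n m eps \subset
  \bigcup_(ct : coloring n b * cmset a b | is_amset ct.2) (Bup ct :|: Blow ct).
Proof.
move=> an; apply/subsetP => H; rewrite inE => /andP[Hh].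
move/forallPn => [Cc /forallPn [T]]; rewrite negb_imply => /andP[amT nb].
apply/bigcupP; exists (Cc, T) => //=.
move: Hh; rewrite inE => /andP[HA Hm].
have ct : count_type H Cc T = #|H :&: @Sset a n b Cc T|.
  rewrite /count_type; congr (fun X : {set {set 'I_n}} => #|X|).
  apply/setP => e; rewrite !inE.
  case eH: (e \in H) => //=.
  by have := subsetP HA e eH; rewrite /Aset inE => ->.
have pe : pC R Cc T = #|@Sset a n b Cc T|%:R / #|@Aset a n|%:R.
  by rewrite /pC card_Sset // card_Aset.
rewrite ct pe in nb.
rewrite !inE HA Hm /=.
move: nb; rewrite negb_and -!ltNge => /orP[h|h]; apply/orP; [right|left]; by [].
Qed.
End Main.

Unset Implicit Arguments.

Theorem lemma11 (R : realType) (a b : nat) (eps : R) (m : nat -> nat) :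
  (2 <= a)%N -> (2 <= b)%N -> 0 < eps ->
  (forall K : R, exists N : nat, forall n : nat, (N <= n)%N -> K * n%:R < (m n)%:R) ->
  forall delta : R, 0 < delta ->
  exists N : nat, forall n : nat, (N <= n)%N ->
    (#|@bad_family R a b n (m n) eps|%:R <= delta * (#|hyp_family a n (m n)|%:R) :> R).
Proof.
move=> a2 b2 e0 Hm delta d0.
set c := cst eps.
have c0 : 0 < c := cst_gt0 e0.
set K := (2 * b%:R - 1) / c.
have [N1 HN1] := Hm K.
set Q : R := ((a.+1) ^ b * 2)%N%:R / delta.
have Q0 : 0 <= Q by rewrite divr_ge0 // ltW.
exists (maxn (maxn N1 (Num.Def.archi_bound Q)) a).
move=> n; rewrite !geq_max => /andP[/andP[n1 n2] an].
have hK := HN1 n n1.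
move: hK; set mm := m n => hK.
have A0 : (0 < #|@Aset a n|)%N by rewrite card_Aset bin_gt0.
have hf : hyp_family a n mm = draws (@Aset a n) mm by [].
rewrite hf /draws cards_draws.
set Cm := 'C(#|@Aset a n|, mm).
set E := expR (- (c * mm%:R)).
apply: (@le_trans _ _ (#|{: coloring n b * cmset a b}|%:R * (2 * Cm%:R * E))).
  apply: (@le_trans _ _ (\sum_(ct : coloring n b * cmset a b | is_amset ct.2)
                          (#|@Bup R a b n mm eps ct| + #|@Blow R a b n mm eps ct|)%N%:R)).
    rewrite -natr_sum ler_nat.
    apply: leq_trans (subset_leq_card (@bad_sub R a b n mm eps an)) _.
    apply: leq_trans (card_bigcup_le _ _) _.
    by apply: leq_sum => ct _; exact: (leq_card_setU _ _).1.
  apply: (@le_trans _ _ (\sum_(ct : coloring n b * cmset a b | is_amset ct.2)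
                          (2 * Cm%:R * E))).
    apply: ler_sum => -[Cc T] /= amT.
    have SA : @Sset a n b Cc T \subset @Aset a n.
      by apply/subsetP => e; rewrite inE => /andP[].
    rewrite natrD.
    apply: le_trans (lerD (tail_up mm SA A0 e0) (tail_low mm SA A0 e0)) _.
    by rewrite -/c -/E le_eqVlt; apply/orP; left; apply/eqP; ring.
  rewrite [#|_|%:R * _]mulr_natl -[_ *+ #|_|]sumr_const.
  rewrite [X in _ <= X](bigID (fun ct : coloring n b * cmset a b => is_amset ct.2)) /=.
  rewrite lerDl.
  apply: sumr_ge0 => ct _; apply: mulr_ge0; last exact: expR_ge0.
  by apply: mulr_ge0 => //; rewrite ler0n.
rewrite card_prod !card_ffun !card_ord.
have -> : ((b ^ n * a.+1 ^ b)%N%:R * (2 * Cm%:R * E)) =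
          ((b ^ n * a.+1 ^ b)%N%:R * 2 * E) * Cm%:R :> R by ring.
apply: ler_wpM2r => //.
have hE : (2 * b%:R) ^+ n <= expR (c * mm%:R).
  apply: (@le_trans _ _ (expR (c * K * n%:R))).
    rewrite expRM_natr lerXn2r // ?nnegrE ?expR_ge0 //.
      by apply: mulr_ge0 => //; rewrite ler0n.
    apply: (le_trans _ (expR_ge1Dx (c * K))); rewrite /K [c * _]mulrC divfK ?lt0r_neq0 //.
    lra.
  by rewrite ler_expR -mulrA ler_pM2l // ltW.
rewrite /E expRN ler_pdivrMr ?expR_gt0 //.
apply: (@le_trans _ _ (delta * (2 * b%:R) ^+ n)); last by rewrite ler_wpM2l // ltW.
have Q2 : Q < 2 ^+ n := upper_nthrootP n2.
rewrite /Q ltr_pdivrMr // in Q2.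
have Bn : 0 <= b%:R ^+ n :> R by rewrite exprn_ge0 // ler0n.
rewrite exprMn !natrM !natrX in Q2 *.
move: Q2 Bn; set Y := (a.+1)%:R ^+ b; set T2 := (2 : R) ^+ n; set Bb := b%:R ^+ n.
move=> Q2 Bn; nra.
Qed.
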